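(* Let $A$ be an $n$-by-$n$ doubly nonnegative matrix. Then there is an $\epsilon>0$ such that $(\epsilon A+I)^t$ is doubly nonnegative for all $t\ge n-2$.
   Context: A real matrix is doubly nonnegative if it is symmetric, positive semidefinite, and entry-wise nonnegative. For a positive definite matrix $B=\sum_i\mu_ix_ix_i^T$ (orthonormal eigenvectors, $\mu_i>0$) and real $t$, $B^t=\sum_i\mu_i^tx_ix_i^T$. *)

(* Defs.v *)
From HB Require Import structures.
From mathcomp Require Import all_boot all_order all_algebra.
From mathcomp Require Import boolp reals exp.
Set Implicit Arguments. Unset Strict Implicit. Unset Printing Implicit Defensive.
Import Order.TTheory GRing.Theory Num.Theory.
Local Open Scope ring_scope.

Section Defs.
Variable R : realType.

Definition doubly_nonnegative n (B : 'M[R]_n) : Prop :=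
  [/\ B^T = B,
      (forall x : 'cV[R]_n, 0 <= (x^T *m B *m x) 0 0)
    & (forall i j, 0 <= B i j)].

Definition pos_spectral_decomp n (B Q : 'M[R]_n) (mu : 'rV[R]_n) : Prop :=
  [/\ Q^T *m Q = 1%:M, (forall i, 0 < mu 0 i) & B = Q *m diag_mx mu *m Q^T].

Definition pd_decomp_exists n (B : 'M[R]_n) : Prop :=
  exists p : 'M[R]_n * 'rV[R]_n, pos_spectral_decomp B p.1 p.2.

(* B^t = sum_i mu_i^t x_i x_i^T for a positive definite B (chosen
   decomposition; the value does not depend on the choice).  For B not
   positive definite we return 0 (never used in the theorem). *)
Definition mpowr n (B : 'M[R]_n) (t : R) : 'M[R]_n :=
  match pselect (pd_decomp_exists B) with
  | left h => let p := projT1 (cid h) in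
      p.1 *m diag_mx (map_mx (fun m => powR m t) p.2) *m p.1^T
  | right _ => 0
  end.

End Defs.

(* Main.v *)
Require Import Defs.
From HB Require Import structures.
From mathcomp Require Import all_boot all_order all_algebra.
From mathcomp Require Import boolp reals exp.
From mathcomp Require Import classical_sets functions topology normedtype derive realfun.
From mathcomp Require Import ring lra.
Import Order.TTheory GRing.Theory Num.Theory numFieldNormedType.Exports.
Local Open Scope ring_scope.
Lemma pow1z_le {R : realType} (N : nat) (z : R) : 0 <= z <= 1 ->
  (1 + z) ^+ N <= 1 + 3 ^+ N * z.
Proof.
move=> /andP[z0 z1]; elim: N => [|N IH]; first by rewrite !expr0 mul1r; lra.
rewrite exprS mulrC exprS.
have h3 : 0 <= 3 ^+ N :> R by rewrite exprn_ge0.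
have : (1 + z) ^+ N * (1 + z) <= (1 + 3 ^+ N * z) * (1 + z).
  by rewrite ler_wpM2r // addr_ge0.
move=> H; apply: (le_trans H).
have h1 : 1 <= 3 ^+ N :> R by apply: exprn_ege1; lra.
set x := 3 ^+ N in h1 h3 *.
have p1 : 0 <= x * z * (1 - z) by rewrite mulr_ge0 ?mulr_ge0 // subr_ge0.
have p2 : 0 <= z * (x - 1) by rewrite mulr_ge0 // subr_ge0.
nra.
Qed.

Lemma powbound {R : realType} (N : nat) (z a : R) : 0 <= z <= 1 ->
  -1 <= a <= N%:R -> `|(1 + z) `^ a - 1| <= 3 ^+ N * z.
Proof.
move=> /andP[z0 z1] /andP[a1 aN].
have h1z : 1 <= 1 + z by rewrite lerDl.
have h3 : 1 <= 3 ^+ N :> R by apply: exprn_ege1; lra.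
have hz3 : z <= 3 ^+ N * z by rewrite ler_peMl.
case: (lerP 0 a) => a0.
- have lo : 1 <= (1 + z) `^ a by rewrite -{1}(powRr0 (1 + z)); apply: ler_powR.
  have hi : (1 + z) `^ a <= (1 + z) ^+ N.
    by rewrite -powR_mulrn ?addr_ge0 //; apply: ler_powR.
  rewrite ger0_norm ?subr_ge0 //.
  have H : (1 + z) ^+ N <= 1 + 3 ^+ N * z by apply: pow1z_le; rewrite z0 z1.
  lra.
- have hi : (1 + z) `^ a <= 1.
    by rewrite -[leRHS](powRr0 (1 + z)); apply: ler_powR => //; apply: ltW.
  have lo : (1 + z)^-1 <= (1 + z) `^ a by rewrite -powR_inv1 ?addr_ge0 //; apply: ler_powR.
  rewrite ler0_norm ?subr_le0 // opprB.
  have : 1 - (1 + z)^-1 <= z.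
    rewrite lerBlDr -lerBlDl.
    have hp : 0 < 1 + z by lra.
    rewrite -(ler_pM2l hp) mulrV ?unitfE ?gt_eqF //. nra.
  lra.
Qed.
Lemma der_lin {R : realType} (l x : R) : is_derive x 1 (fun y : R => 1 + y * l) l.
Proof.
have H := is_deriveD (is_derive_cst (1:R) x 1) (is_deriveM (is_derive_id x (1:R)) (is_derive_cst l x 1)).
match type of H with is_derive _ _ ?f _ =>
  have -> : (fun y : R => 1 + y * l) = f by apply/funext => y end.
apply: (is_derive_eq H).
by rewrite /= scaler0 !add0r; apply: mulr1.
Qed.

Lemma der_comp {R : realType} (l a x : R) : 0 < 1 + x * l ->
  is_derive x 1 (fun y : R => (1 + y * l) `^ a) (a * (1 + x * l) `^ (a - 1) * l).
Proof.
move=> h.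
have H := @is_derive1_comp R (fun b : R => b `^ a) (fun y : R => 1 + y * l) x _ _ (is_derive1_powR a h) (der_lin l x).
exact: H.
Qed.

Lemma der_term {R : realType} (cc l a x : R) : 0 < 1 + x * l ->
  is_derive x 1 (fun y : R => cc * (1 + y * l) `^ a) (cc * (a * (1 + x * l) `^ (a - 1) * l)).
Proof.
move=> h.
have H := is_deriveZ cc (@der_comp R l a x h).
exact: H.
Qed.

Definition Gf {R : realType} {m : nat} (c l : 'I_m -> R) (s : R) (r : nat) (y : R) : R :=
  \sum_(k < m) c k * l k ^+ r * (1 + y * l k) `^ (s - r%:R).

Lemma Gf_der {R : realType} m (c l : 'I_m -> R) (s : R) (r : nat) (x : R) :
  (forall k, 0 <= l k) -> 0 <= x ->
  is_derive x 1 (Gf c l s r) ((s - r%:R) * Gf c l s r.+1 x).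
Proof.
move=> l0 x0.
have hp : forall k, 0 < 1 + x * l k.
  move=> k; have h1 : 0 <= x * l k by rewrite mulr_ge0.
  lra.
have H := is_derive_sum (fun k => @der_term R (c k * l k ^+ r) (l k) (s - r%:R) x (hp k)).
match type of H with is_derive _ _ ?f _ =>
  have -> : Gf c l s r = f by apply/funext => y; rewrite /Gf fct_sumE end.
apply: (is_derive_eq H).
rewrite /Gf mulr_sumr; apply: eq_bigr => k _.
have -> : s - r%:R - 1 = s - r.+1%:R by rewrite -natr1; ring.
rewrite exprS; ring.
Qed.

Local Open Scope classical_set_scope.
Lemma Gf_cont {R : realType} m (c l : 'I_m -> R) (s : R) (r : nat) (e : R) :
  (forall k, 0 <= l k) ->
  {within `[0, e], continuous (Gf c l s r)}.
Proof.
move=> l0; apply: continuous_in_subspaceT => x; rewrite inE /= in_itv /= => /andP[x0 _].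
have [dx _] := @Gf_der R m c l s r x l0 x0.
exact/differentiable_continuous/derivable1_diffP.
Qed.

Local Close Scope classical_set_scope.
Lemma chain {R : realType} m (c l : 'I_m -> R) (s e : R) (d : nat) :
  (forall k, 0 <= l k) ->
  (forall r, (r < d)%N -> \sum_k c k * l k ^+ r = 0) ->
  (forall r, (r < d)%N -> r%:R <= s) ->
  (forall y, 0 <= y <= e -> 0 <= Gf c l s d y) ->
  forall y, 0 <= y <= e -> 0 <= Gf c l s 0 y.
Proof.
move=> l0 hz hs hd.
suff H : forall j, (j <= d)%N -> forall y, 0 <= y <= e -> 0 <= Gf c l s (d - j) y.
  by have := H d (leqnn d); rewrite subnn.
elim=> [|j IH] jd; first by rewrite subn0.
have rd : (d - j.+1 < d)%N by rewrite ltn_subrL; apply/andP; split => //; apply: leq_ltn_trans jd.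
have rS : ((d - j.+1).+1 = d - j)%N by rewrite subnSK.
have IH' := IH (ltnW jd); rewrite -rS in IH'.
set r := (d - j.+1)%N in rd rS IH' *.
have G0 : Gf c l s r 0 = 0.
  rewrite /Gf -[RHS](hz r rd); apply: eq_bigr => k _.
  by rewrite mul0r addr0 powR1 mulr1.
move=> y /andP[y0 ye].
rewrite -G0.
have mono := @ger0_derive1_le_cc R (Gf c l s r) 0 e.
apply: mono.
- move=> x; rewrite in_itv /= => /andP[x0 _].
  by have [] := @Gf_der R m c l s r x l0 (ltW x0).
- move=> x; rewrite in_itv /= => /andP[x0 xe].
  rewrite derive1E; have [_ ->] := @Gf_der R m c l s r x l0 (ltW x0).
  apply: mulr_ge0; first by rewrite subr_ge0 hs.
  by apply: IH'; rewrite (ltW x0) (ltW xe).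
- exact: Gf_cont.
- by rewrite in_itv /= lexx (le_trans y0 ye).
- by rewrite in_itv /= y0 ye.
- exact: y0.
Qed.

Lemma key {R : realType} m (c l : 'I_m -> R) (s e K dl : R) (d N : nat) :
  (forall k, 0 <= l k <= K) -> (forall k, `|c k| <= 1) -> 1 <= K ->
  (forall r, (r < d)%N -> \sum_k c k * l k ^+ r = 0) ->
  (forall r, (r < d)%N -> r%:R <= s) ->
  dl <= \sum_k c k * l k ^+ d ->
  -1 <= s - d%:R <= N%:R -> (d <= N)%N ->
  0 <= e -> e * K <= 1 -> e * (m%:R * K ^+ N.+1 * 3 ^+ N) <= dl ->
  0 <= \sum_k c k * (1 + e * l k) `^ s.
Proof.
move=> hl hc K1 hz hs hdl hsd dN e0 eK eC.
have l0 k : 0 <= l k by case/andP: (hl k).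
have := @chain R m c l s e d l0 hz hs _ e; rewrite e0 lexx => /(_ _ isT).
have -> : Gf c l s 0 e = \sum_k c k * (1 + e * l k) `^ s.
  by apply: eq_bigr => k _; rewrite expr0 mulr1 subr0.
apply => y /andP[y0 ye].
have E : Gf c l s d y = \sum_k c k * l k ^+ d
    + \sum_k c k * l k ^+ d * ((1 + y * l k) `^ (s - d%:R) - 1).
  by rewrite -big_split /=; apply: eq_bigr => k _; ring.
rewrite E.
set S2 := \sum_k c k * l k ^+ d * _.
have hK0 : 0 <= K by lra.
have B : `|S2| <= dl.
  apply: le_trans (ler_norm_sum _ _ _) _.
  apply: le_trans eC.
  have -> : e * (m%:R * K ^+ N.+1 * 3 ^+ N) = \sum_(k < m) (K ^+ N * (3 ^+ N * (e * K))).
    by rewrite sumr_const card_ord -mulr_natr exprS; ring.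
  apply: ler_sum => k _.
  have [lk0 lkK] := andP (hl k).
  have z01 : 0 <= y * l k <= 1.
    rewrite mulr_ge0 //=; apply: le_trans eK.
    by apply: ler_pM.
  have Pb := @powbound R N _ _ z01 hsd.
  rewrite !normrM (ger0_norm (exprn_ge0 _ lk0)).
  have h1 : `|c k| * l k ^+ d <= K ^+ N.
    apply: le_trans (_ : 1 * K ^+ d <= _).
      apply: ler_pM => //; first by apply: exprn_ge0.
      by apply: lerXn2r => //; rewrite nnegrE.
    by rewrite mul1r; apply: ler_weXn2l.
  apply: ler_pM => //.
  - by apply: mulr_ge0 => //; apply: exprn_ge0.
  - apply: le_trans Pb _; apply: ler_wpM2l; first by apply: exprn_ge0.
    by apply: ler_pM.
have := ler_norm S2; rewrite -normrN => h2.
have h3 : - S2 <= dl by apply: le_trans (ler_norm _) _; rewrite normrN.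
lra.
Qed.
Lemma prod_moment {R : realType} m (c l : 'I_m -> R) :
  (forall r, (r < m)%N -> \sum_k c k * l k ^+ r = 0) ->
  forall (J : seq 'I_m) (P : pred 'I_m) r, (r + count P J < m)%N ->
  \sum_k c k * (l k ^+ r * \prod_(j <- J | P j) (l k - l j)) = 0.
Proof.
move=> hz; elim=> [|j J IH] P r /=.
  rewrite addn0 => hr; rewrite -[RHS](hz r hr); apply: eq_bigr => k _.
  by rewrite big_nil mulr1.
case Pj: (P j) => /= h.
- have h1 : (r.+1 + count P J < m)%N by rewrite addSn -addnS.
  have h2 : (r + count P J < m)%N by apply: leq_ltn_trans h; rewrite leq_add2l leqnSn.
  have E : \sum_k c k * (l k ^+ r * \prod_(j0 <- j :: J | P j0) (l k - l j0)) =
     \sum_k c k * (l k ^+ r.+1 * \prod_(j0 <- J | P j0) (l k - l j0))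
     - l j * \sum_k c k * (l k ^+ r * \prod_(j0 <- J | P j0) (l k - l j0)).
    rewrite mulr_sumr -sumrB; apply: eq_bigr => k _.
    by rewrite big_cons Pj exprS; ring.
  by rewrite E IH // IH // mulr0 subr0.
- rewrite add0n in h.
  rewrite -[RHS](IH P r h); apply: eq_bigr => k _.
  by rewrite big_cons Pj.
Qed.

Lemma weight_zero {R : realType} m (c l : 'I_m -> R) :
  (forall r, (r < m)%N -> \sum_k c k * l k ^+ r = 0) ->
  forall k0, \sum_(k | l k == l k0) c k = 0.
Proof.
move=> hz k0.
set P := (fun j : 'I_m => l j != l k0).
have hc : (0 + count P (index_enum 'I_m) < m)%N.
  rewrite add0n.
  have Hs : size (index_enum 'I_m) = m by rewrite /index_enum -enumT size_enum_ord.
  have := count_predC P (index_enum 'I_m); rewrite Hs => Hc.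
  rewrite -[X in (_ < X)%N]Hc. rewrite -{1}(addn0 (count P _)) ltn_add2l -has_count.
  by apply/hasP; exists k0; rewrite ?mem_index_enum //= /P eqxx.
have := @prod_moment R m c l hz _ _ _ hc.
set pi := \prod_(j | P j) (l k0 - l j).
have pi0 : pi != 0.
  by rewrite prodf_seq_neq0; apply/allP => j _; apply/implyP; rewrite /P subr_eq0 eq_sym.
have -> : \sum_k c k * (l k ^+ 0 * \prod_(j <- index_enum 'I_m | P j) (l k - l j))
    = \sum_(k | l k == l k0) c k * pi.
  rewrite (bigID (fun k => l k == l k0)) /= [X in _ + X]big1 ?addr0.
    by apply: eq_bigr => k /eqP ->; rewrite expr0 mul1r.
  move=> k nk; rewrite (bigD1 k) /=; last by rewrite /P nk.
  by rewrite subrr mul0r mulr0 mulr0.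
by rewrite -mulr_suml => /eqP; rewrite mulf_eq0 (negbTE pi0) orbF => /eqP.
Qed.

Lemma zero_case {R : realType} m (c l : 'I_m -> R) :
  (forall r, (r < m)%N -> \sum_k c k * l k ^+ r = 0) ->
  forall g : R -> R, \sum_k c k * g (l k) = 0.
Proof.
move=> hz g.
pose Nn (k : 'I_m) : R := (#|[pred j | l j == l k]|)%:R.
have N0 k : Nn k != 0.
  rewrite pnatr_eq0 -lt0n; apply/card_gt0P; exists k; by rewrite inE /=.
have NE k k0 : l k == l k0 -> Nn k = Nn k0.
  by move/eqP => E; rewrite /Nn; congr (_%:R); apply: eq_card => j; rewrite !inE E.
transitivity (\sum_k \sum_k0 (if l k0 == l k then c k * g (l k) / Nn k else 0)).
  apply: eq_bigr => k _; rewrite -big_mkcond /= sumr_const.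
  have -> : #|[pred k0 | l k0 == l k]| = #|[pred j | l j == l k]| by [].
  by rewrite -mulr_natr -/(Nn k) mulrVK ?unitfE.
rewrite exchange_big /=.
apply: big1 => k0 _.
transitivity (\sum_(k | l k == l k0) c k * (g (l k0) / Nn k0)).
  rewrite [RHS]big_mkcond; apply: eq_bigr => k _; rewrite eq_sym.
  by case: ifP => // /[dup] h /eqP ->; rewrite (NE _ _ h) mulrA.
by rewrite -mulr_suml (@weight_zero R m c l hz) mul0r.
Qed.
Lemma sdm_entry {R : realType} n (Q : 'M[R]_n) (v : 'rV[R]_n) i j :
  (Q *m diag_mx v *m Q^T) i j = \sum_k Q i k * v 0 k * Q j k.
Proof.
rewrite mul_mx_diag mxE; apply: eq_bigr => k _; by rewrite !mxE.
Qed.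

Lemma orthoC {R : realType} {n : nat} {Q : 'M[R]_n} : Q^T *m Q = 1%:M -> Q *m Q^T = 1%:M.
Proof. exact: mulmx1C. Qed.

Lemma sdm_sym {R : realType} n (Q : 'M[R]_n) (v : 'rV[R]_n) :
  (Q *m diag_mx v *m Q^T)^T = Q *m diag_mx v *m Q^T.
Proof. by rewrite !trmx_mul trmxK tr_diag_mx mulmxA. Qed.

Lemma sdm_psd {R : realType} n (Q : 'M[R]_n) (v : 'rV[R]_n) :
  (forall k, 0 <= v 0 k) ->
  forall x : 'cV[R]_n, 0 <= (x^T *m (Q *m diag_mx v *m Q^T) *m x) 0 0.
Proof.
move=> v0 x.
set y := Q^T *m x.
have -> : x^T *m (Q *m diag_mx v *m Q^T) *m x = y^T *m diag_mx v *m y.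
  by rewrite /y trmx_mul trmxK !mulmxA.
rewrite mxE; apply: sumr_ge0 => k _.
rewrite mul_mx_diag !mxE.
by rewrite mulrC mulrA; apply: mulr_ge0 => //; rewrite -expr2 sqr_ge0.
Qed.

Fixpoint mxpow (R : realType) n (B : 'M[R]_n) (k : nat) : 'M[R]_n :=
  if k is k'.+1 then mxpow R n B k' *m B else 1%:M.
Arguments mxpow {R n}.

Lemma mxpow_sdm {R : realType} n (Q : 'M[R]_n) (v : 'rV[R]_n) :
  Q^T *m Q = 1%:M -> forall k,
  mxpow (Q *m diag_mx v *m Q^T) k = Q *m diag_mx (map_mx (fun x => x ^+ k) v) *m Q^T.
Proof.
move=> hQ; elim=> [|k IH] /=.
  have -> : diag_mx (map_mx (fun x => x ^+ 0) v) = 1%:M.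
    by apply/matrixP => a b; rewrite !mxE expr0.
  by rewrite mulmx1 orthoC.
rewrite IH -!mulmxA (mulmxA Q^T) hQ mul1mx (mulmxA (diag_mx _)) mulmx_diag mulmxA.
rewrite mulmxA; congr (_ *m diag_mx _ *m _).
by apply/matrixP => a b; rewrite !mxE exprSr (ord1 a).
Qed.

Definition nonneg {R : realType} {n : nat} (B : 'M[R]_n) := forall i j, 0 <= B i j.

Lemma nonneg_mul {R : realType} n (B C : 'M[R]_n) : nonneg B -> nonneg C -> nonneg (B *m C).
Proof. by move=> hB hC i j; rewrite mxE; apply: sumr_ge0 => k _; apply: mulr_ge0. Qed.

Lemma nonneg_pow {R : realType} n (B : 'M[R]_n) k : nonneg B -> nonneg (mxpow B k).
Proof.
move=> hB; elim: k => [|k IH] /=; last exact: nonneg_mul.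
by move=> i j; rewrite mxE; case: (i == j).
Qed.

Lemma quad_diag {R : realType} n (y : 'cV[R]_n) (v : 'rV[R]_n) :
  (y^T *m diag_mx v *m y) 0 0 = \sum_k y k 0 ^+ 2 * v 0 k.
Proof.
rewrite mxE; apply: eq_bigr => k _; rewrite mul_mx_diag !mxE; ring.
Qed.

Lemma A_sdm {R : realType} n (A Q : 'M[R]_n) (mu : 'rV[R]_n) (e : R) :
  e != 0 -> Q^T *m Q = 1%:M -> e *: A + 1%:M = Q *m diag_mx mu *m Q^T ->
  A = Q *m diag_mx (map_mx (fun x => (x - 1) / e) mu) *m Q^T.
Proof.
move=> e0 hQ hB; apply/matrixP => i j.
have h1 := congr1 (fun M : 'M[R]_n => M i j) hB; rewrite /= sdm_entry !mxE in h1.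
have h2 : (i == j)%:R = \sum_k Q i k * Q j k.
  have := congr1 (fun M : 'M[R]_n => M i j) (orthoC hQ); rewrite /= [RHS]mxE mxE => <-.
  by apply: eq_bigr => k _; rewrite mxE.
rewrite sdm_entry.
apply: (mulfI e0).
have -> : e * A i j = \sum_k Q i k * mu 0 k * Q j k - (i == j)%:R by rewrite -h1; ring.
rewrite h2 -sumrB mulr_sumr; apply: eq_bigr => k _; rewrite !mxE.
by field.
Qed.

Lemma Q_bound {R : realType} n (Q : 'M[R]_n) : Q^T *m Q = 1%:M -> forall i k, `|Q i k| <= 1.
Proof.
move=> hQ i k.
have h := congr1 (fun M : 'M[R]_n => M k k) hQ; rewrite /= !mxE eqxx /= in h.
have hs : Q i k ^+ 2 <= 1.
  apply: (@le_trans _ _ (\sum_j Q^T k j * Q j k)); last by rewrite h.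
  rewrite (bigD1 i) //= mxE -expr2 lerDl; apply: sumr_ge0 => j _.
  by rewrite mxE -expr2 sqr_ge0.
have : -1 <= Q i k <= 1.
  set x := Q i k in hs *; rewrite expr2 in hs; apply/andP; split; nra.
by rewrite ler_norml.
Qed.

Lemma lam_ge0 {R : realType} n (A Q : 'M[R]_n) (l : 'rV[R]_n) :
  (forall x : 'cV[R]_n, 0 <= (x^T *m A *m x) 0 0) ->
  Q^T *m Q = 1%:M -> A = Q *m diag_mx l *m Q^T -> forall k, 0 <= l 0 k.
Proof.
move=> psd hQ hA k.
pose dk : 'cV[R]_n := delta_mx k 0.
have := psd (Q *m dk).
have -> : (Q *m dk)^T *m A *m (Q *m dk) = dk^T *m diag_mx l *m dk.
  rewrite hA trmx_mul -!mulmxA (mulmxA Q^T Q) hQ mul1mx.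
  by rewrite (mulmxA Q^T Q) hQ mul1mx !mulmxA.
rewrite quad_diag (bigD1 k) //= big1 ?addr0.
  by rewrite mxE !eqxx /= expr1n mul1r.
by move=> j jk; rewrite mxE (negbTE jk) /= expr0n /= mul0r.
Qed.

Lemma lam_tr {R : realType} n (A Q : 'M[R]_n) (l : 'rV[R]_n) :
  Q^T *m Q = 1%:M -> A = Q *m diag_mx l *m Q^T -> \sum_k l 0 k = \tr A.
Proof.
move=> hQ ->; rewrite -mulmxA mxtrace_mulC -mulmxA hQ mulmx1 mxtrace_diag //.
Qed.

Theorem theorem5p1 (R : realType) (n : nat) (A : 'M[R]_n) :
  doubly_nonnegative A ->
  exists eps : R, 0 < eps /\
    forall t : R, n%:R - 2 <= t ->
      doubly_nonnegative (mpowr (eps *: A + 1%:M) t).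
Proof.
case=> Asym Apsd Anon.
pose K : R := 1 + \tr A.
have trA0 : 0 <= \tr A by rewrite /mxtrace; apply: sumr_ge0 => i _; apply: Anon.
have K1 : 1 <= K by rewrite /K lerDl.
pose f (p : 'I_n * 'I_n * 'I_n) : R :=
  if 0 < mxpow A p.1.1 p.1.2 p.2 then Num.min (mxpow A p.1.1 p.1.2 p.2) 1 else 1.
have f01 p : 0 < f p <= 1.
  rewrite /f; case: ifP => h; last by rewrite ltr01 lexx.
  by rewrite lt_min h ltr01 ge_min lexx orbT.
pose dl := \prod_p f p.
have dl0 : 0 < dl by apply: prodr_gt0 => p _; case/andP: (f01 p).
have dl1 : dl <= 1 by apply: prodr_ile1 => p _; case/andP: (f01 p) => /ltW -> ->.
have dlle r i j : (r < n)%N -> 0 < mxpow A r i j -> dl <= mxpow A r i j.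
  move=> rn h.
  have : dl <= f (Ordinal rn, i, j).
    rewrite /dl (bigD1 (Ordinal rn, i, j)) //=.
    apply: ler_piMr; first by case/andP: (f01 (Ordinal rn, i, j)) => /ltW.
    by apply: prodr_ile1 => p _; case/andP: (f01 p) => /ltW -> ->.
  rewrite /f /= h => H; apply: le_trans H _.
  by rewrite ge_min lexx.
pose C : R := n%:R * K ^+ n.+1 * 3 ^+ n.
have C0 : 0 <= C by rewrite /C !mulr_ge0 // exprn_ge0 // ?ler0n //; lra.
pose e := dl / (K * (C + 1)).
have K0 : 0 < K by lra.
have C10 : 0 < C + 1 by lra.
have e0 : 0 < e by rewrite /e divr_gt0 // mulr_gt0.
exists e; split => //.
have KC0 : 0 < K * (C + 1) by rewrite mulr_gt0.
have eK : e * K <= 1.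
  rewrite /e mulrAC ler_pdivrMr // mul1r.
  have : dl * K <= 1 * K by apply: ler_wpM2r => //; exact: (ltW K0).
  have : K <= K * (C + 1) by apply: ler_peMr; [exact: (ltW K0) | lra].
  lra.
have eC : e * C <= dl.
  rewrite /e mulrAC ler_pdivrMr //.
  have : C <= K * (C + 1).
    have : C + 1 <= K * (C + 1) by apply: ler_peMl => //; exact: (ltW C10).
    lra.
  move=> H; apply: ler_wpM2l => //; exact: (ltW dl0).
move=> t ht.
have Bnon : nonneg (e *: A + 1%:M).
  move=> i j; rewrite !mxE; apply: addr_ge0; first by apply: mulr_ge0; [exact: (ltW e0) | exact: Anon].
  by case: (i == j).
rewrite /mpowr; case: pselect => [h|_]; last first.
  split; first by rewrite trmx0.
  - by move=> x; rewrite mulmx0 mul0mx mxE.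
  - by move=> i j; rewrite mxE.
case: (cid h) => [[Q mu] [/= hQ hmu hBQ]] /=.
split; first exact: sdm_sym.
  by apply: sdm_psd => k; rewrite mxE powR_ge0.
have en0 : e != 0 by rewrite gt_eqF.
have hA := @A_sdm R n A Q mu e en0 hQ hBQ.
set lam := map_mx (fun x => (x - 1) / e) mu in hA.
have lam0 := @lam_ge0 R n A Q _ Apsd hQ hA.
have lamK k : lam 0 k <= K.
  have := @lam_tr R n A Q _ hQ hA; rewrite (bigD1 k) //= => E.
  have : 0 <= \sum_(j | j != k) lam 0 j by apply: sumr_ge0 => j _; apply: lam0.
  rewrite /K; lra.
pose m := Num.truncn (t - (n%:R - 2)).
have tn0 : 0 <= t - (n%:R - 2) by lra.
have hm1 : m%:R <= t - (n%:R - 2) by rewrite /m truncn_le.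
have hm2 : t - (n%:R - 2) < m.+1%:R by apply: truncnS_gt.
pose s := t - m%:R.
have s1 : n%:R - 2 <= s by rewrite /s; lra.
have s2 : s < n%:R - 1 by rewrite /s; move: hm2; rewrite -natr1; lra.
have Et : Q *m diag_mx (map_mx (fun x => x `^ t) mu) *m Q^T =
    mxpow (e *: A + 1%:M) m *m (Q *m diag_mx (map_mx (fun x => x `^ s) mu) *m Q^T).
  rewrite hBQ (@mxpow_sdm R n Q _ hQ) -!mulmxA (mulmxA Q^T Q) hQ mul1mx.
  rewrite (mulmxA (diag_mx _)) mulmx_diag !mulmxA; congr (_ *m diag_mx _ *m _).
  apply/matrixP => a b; rewrite !mxE (ord1 a).
  have mu0 := hmu b.
  have -> : t = m%:R + s by rewrite /s; lra.
  rewrite powRD; last by apply/implyP => _; rewrite gt_eqF.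
  by rewrite powR_mulrn // ltW.
rewrite Et; apply: nonneg_mul; first exact: nonneg_pow.
move=> i j; rewrite sdm_entry.
pose c k := Q i k * Q j k.
pose l k := lam 0 k.
have Ec : \sum_k Q i k * (map_mx (fun x => x `^ s) mu) 0 k * Q j k
    = \sum_k c k * (1 + e * l k) `^ s.
  apply: eq_bigr => k _; rewrite /c /l !mxE.
  have -> : 1 + e * ((mu 0 k - 1) / e) = mu 0 k by field.
  ring.
rewrite Ec.
have Mom r : mxpow A r i j = \sum_k c k * l k ^+ r.
  rewrite {1}hA (@mxpow_sdm R n Q _ hQ) sdm_entry; apply: eq_bigr => k _.
  rewrite /c /l !mxE; ring.
have cb k : `|c k| <= 1.
  rewrite /c normrM; apply: mulr_ile1 => //; exact: Q_bound.
have [/existsP [r0 hr0]|hno] := boolP [exists r : 'I_n, mxpow A r i j != 0].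
- have ex : exists r, (r < n)%N && (mxpow A r i j != 0) by exists r0; rewrite ltn_ord hr0.
  case: (ex_minnP ex) => d /andP[dn dnz] dmin.
  have hz r : (r < d)%N -> \sum_k c k * l k ^+ r = 0.
    move=> rd; rewrite -Mom; apply/eqP; apply/negPn/negP => hr.
    have := dmin r; rewrite hr (ltn_trans rd dn) /= => /(_ isT).
    by rewrite leqNgt rd.
  have hs r : (r < d)%N -> r%:R <= s.
    move=> rd; have : (r.+2 <= n)%N by apply: leq_trans dn.
    rewrite -(ler_nat R) -addn2 natrD => H; lra.
  have mdpos : 0 < mxpow A d i j.
    by rewrite lt_def dnz /=; apply: nonneg_pow.
  have hdl : dl <= \sum_k c k * l k ^+ d by rewrite -Mom; apply: dlle.
  have hsd : -1 <= s - d%:R <= n%:R.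
    have : (d.+1 <= n)%N by [].
    rewrite -(ler_nat R) -natr1 => H.
    have : 0 <= d%:R :> R by apply: ler0n.
    move=> H2; apply/andP; split; lra.
  apply: (@key R n c l s e K dl d n) => //.
  + by move=> k; rewrite lam0 lamK.
  + by apply: ltnW.
  + exact: ltW.
- have hz r : (r < n)%N -> \sum_k c k * l k ^+ r = 0.
    move=> rn; rewrite -Mom; move/existsPn: hno => /(_ (Ordinal rn)).
    by rewrite negbK => /eqP.
  have Z := @zero_case R n c l hz (fun x => (1 + e * x) `^ s).
  by rewrite /= in Z; rewrite Z.
Qed.
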